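(* Let $L$ be a field of characteristic $p>0$ and let $Z,T$ be indeterminates over $L$. Let $g = Z^{p^e} - \alpha T^m + \beta$, where $\alpha,\beta \in L$ are nonzero and $e \ge 1$, $m>1$ are integers with $m$ coprime to $p$. Then $D = L[Z,T]/(g)$ does not admit any non-trivial exponential map.
   Context: For an $L$-algebra $D$ and an indeterminate $U$ over $D$, an $L$-algebra homomorphism $\phi = \phi_U : D \to D[U]$ is an exponential map on $D$ if (i) $\varepsilon_0 \circ \phi_U$ is the identity of $D$, where $\varepsilon_0 : D[U]\to D$ is evaluation at $U=0$; and (ii) $\phi_V \circ \phi_U = \phi_{V+U}$, where $\phi_V: D \to D[V]$ (same map with $U$ replaced by another indeterminate $V$) is extended to $D[U] \to D[V,U]$ by $\phi_V(U)=U$. The ring of invariants is $D^{\phi} = \{a\in D : \phi(a) = a\}$, and $\phi$ is non-trivial if $D^\phi \neq D$. *)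

(* Defs.v *)
From HB Require Import structures.
From mathcomp Require Import all_boot all_order all_algebra.
Set Implicit Arguments. Unset Strict Implicit. Unset Printing Implicit Defensive.
Import GRing.Theory.
Local Open Scope ring_scope.

(* Bivariate polynomials over L: {poly {poly L}}, inner variable Z, outer T. *)

Definition ev2 (L : fieldType) (D : comAlgType L) (z t : D)
  (q : {poly {poly L}}) : D :=
  (map_poly (fun r : {poly L} => (map_poly (in_alg D) r).[z]) q).[t].

Definition gpoly (L : fieldType) (p e m : nat) (alpha beta : L)
  : {poly {poly L}} :=
  ('X^(p ^ e)%N + beta%:P)%:P - (alpha%:P)%:P * 'X^m.

(* Exponential map on the L-algebra D, given as a ring morphism
   phi : D -> D[U] (U is the variable of {poly D}):
   - phi is L-linear (fixes the image of L), so phi is an L-algebra hom;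
   - (i)  evaluation at U = 0 after phi is the identity;
   - (ii) phi_V o phi_U = phi_{V+U}: in {poly {poly D}} the outer variable
          is U and the inner one is V. *)
Definition exponential_map (L : fieldType) (D : comAlgType L)
  (phi : {rmorphism D -> {poly D}}) : Prop :=
  [/\ forall c : L, phi (c%:A) = (c%:A)%:P,
      forall a : D, (phi a).[0] = a
    & forall a : D,
        map_poly phi (phi a) = (map_poly polyC (phi a)) \Po ('X + ('X)%:P)].

Definition invariants (L : fieldType) (D : comAlgType L)
  (phi : {rmorphism D -> {poly D}}) : pred D := fun a => phi a == a%:P.

Definition nontrivial_exp (L : fieldType) (D : comAlgType L)
  (phi : {rmorphism D -> {poly D}}) : Prop :=
  exists a : D, a \notin invariants phi.

(* Main.v *)
Require Import Defs.
From HB Require Import structures.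
From mathcomp Require Import all_boot all_order all_algebra.
From mathcomp Require Import zify.
Import GRing.Theory.
Local Open Scope ring_scope.

Lemma distinct_weights q m a b i j : coprime m q -> (i < q)%N -> (j < q)%N ->
  (q * a + m * i = q * b + m * j)%N -> i = j.
Proof.
move=> cmq.
wlog le : a b i j / (i <= j)%N.
  move=> W hi hj E; case: (leqP i j) => h.
    exact: (W a b i j h hi hj E).
  by apply/esym; apply: (W b a j i (ltnW h) hj hi); rewrite E.
move=> hi hj E.
have E2 : (m * (j - i) = q * (a - b))%N by rewrite mulnBr mulnBr; lia.
have : (q %| j - i)%N.
  by rewrite -(@Gauss_dvdr q m) 1?coprime_sym // E2 dvdn_mulr.
case: (posnP (j - i)) => [h0|hp]; first by move=> _; lia.
move/(dvdn_leq hp) => hq; lia.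
Qed.
Lemma sum_sizes (R : nzRingType) (I : eqType) (s : seq I) (F : I -> {poly R}) :
  uniq s ->
  {in s &, forall x y, F x != 0 -> F y != 0 -> size (F x) = size (F y) -> x = y} ->
  (forall x, x \in s -> F x = 0) \/
  exists2 x, x \in s & [/\ F x != 0, size (\sum_(y <- s) F y) = size (F x)
                       & forall y, y \in s -> (size (F y) <= size (F x))%N].
Proof.
elim: s => [|a s IH] /=; first by left.
move=> /andP[as_ us] hd.
have hd' : {in s &, forall x y, F x != 0 -> F y != 0 -> size (F x) = size (F y) -> x = y}.
  by move=> x y xs ys; apply: hd; rewrite inE ?xs ?ys orbT.
rewrite big_cons.
case: (IH us hd') => [h0 | [x xs [nx hsz hmax]]].
  rewrite big1_seq; last by move=> y /andP[_ /h0].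
  rewrite addr0.
  have [Fa0|Fa0] := eqVneq (F a) 0.
    by left => y; rewrite inE => /orP[/eqP->|/h0].
  right; exists a; first by rewrite inE eqxx.
  split=> // y; rewrite inE => /orP[/eqP->//|/h0->].
  by rewrite size_poly0.
have [Fa0|Fa0] := eqVneq (F a) 0.
  right; exists x; first by rewrite inE xs orbT.
  split=> //; first by rewrite Fa0 add0r.
  by move=> y; rewrite inE => /orP[/eqP->|/hmax//]; rewrite Fa0 size_poly0.
have hne : size (F a) != size (F x).
  apply/eqP=> e; have eax := hd a x; move: as_.
  by rewrite (eax _ _ Fa0 nx e) ?xs // inE ?eqxx ?xs ?orbT.
case: (ltngtP (size (F a)) (size (F x))) hne => // [lt|gt] _.
  right; exists x; first by rewrite inE xs orbT.
  split=> //; first by rewrite addrC size_polyDl // hsz.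
  move=> y; rewrite inE => /orP[/eqP->|/hmax//]; exact: ltnW.
right; exists a; first by rewrite inE eqxx.
split=> //; first by rewrite size_polyDl // hsz.
move=> y; rewrite inE => /orP[/eqP->//|/hmax h]; exact: (leq_trans h (ltnW gt)).
Qed.

Lemma lead_exp (R : nzRingType) (P : {poly R}) j :
  lead_coef P ^+ j != 0 ->
  size (P ^+ j) = ((size P).-1 * j).+1 /\ lead_coef (P ^+ j) = lead_coef P ^+ j.
Proof.
elim: j => [|j IH]; first by rewrite !expr0 size_poly1 lead_coef1 muln0.
move=> h.
have hj : lead_coef P ^+ j != 0.
  by apply: contraNneq h; rewrite exprSr => ->; rewrite mul0r.
have [s1 l1] := IH hj.
have hP : P != 0.
  by apply: contraNneq h => ->; rewrite lead_coef0 expr0n.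
have hm : lead_coef (P ^+ j) * lead_coef P != 0 by rewrite l1 -exprSr.
rewrite exprSr size_proper_mul // lead_coef_proper_mul // l1 -exprSr; split=> //.
rewrite s1 (polySpred hP); lia.
Qed.

Lemma comp_lead (R : comNzRingType) (c P : {poly R}) :
  (1 < size P)%N -> c != 0 ->
  (forall j, lead_coef c * lead_coef P ^+ j != 0) ->
  size (c \Po P) = ((size c).-1 * (size P).-1).+1 /\
  lead_coef (c \Po P) = lead_coef c * lead_coef P ^+ (size c).-1.
Proof.
move=> hP; elim/poly_ind: c => [|c k IH]; first by rewrite eqxx.
move=> nz hl.
have [c0|c0] := eqVneq c 0.
  move: nz hl; rewrite c0 mul0r add0r comp_polyC size_polyC lead_coefC polyC_eq0 => nk _.
  by rewrite nk /= expr0 mulr1.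
have ll : lead_coef (c * 'X + k%:P) = lead_coef c.
  rewrite lead_coefDl ?lead_coefMX //.
  by rewrite size_mulX // (leq_ltn_trans (size_polyC_leq1 k)) // ltnS lt0n size_poly_eq0.
have sz : size (c * 'X + k%:P) = (size c).+1 by rewrite size_MXaddC (negbTE c0).
rewrite ll in hl; rewrite ll sz /=.
have [s1 l1] := IH c0 hl.
rewrite comp_polyD comp_polyC comp_polyM comp_polyX.
have hm : lead_coef (c \Po P) * lead_coef P != 0.
  by rewrite l1 -mulrA -exprSr.
have s2 : size ((c \Po P) * P) = ((size c * (size P).-1)).+1.
  rewrite size_proper_mul // s1 (polySpred c0) /=.
  have P0 : P != 0 by apply: contraTneq hP => ->; rewrite size_poly0.
  move: hP; rewrite (polySpred P0) => hP; lia.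
have s3 : (size k%:P < size ((c \Po P) * P)%R)%N.
  have c1 : (0 < size c)%N by rewrite lt0n size_poly_eq0.
  have := size_polyC_leq1 k; rewrite s2; move: c1 hP; clear; nia.
rewrite size_polyDl // lead_coefDl // s2 lead_coef_proper_mul // l1 -mulrA -exprSr.
by rewrite (polySpred c0).
Qed.

Lemma coef_XY_exp (R : comNzRingType) j i :
  (('X + ('X)%:P : {poly {poly R}}) ^+ j)`_i = 'X^(j - i) *+ 'C(j, i).
Proof.
elim: j i => [|j IH] i.
  rewrite expr0 coefC; case: i => [|i] //=; by rewrite bin0n ?mulr1n.
rewrite exprSr mulrDr coefD coefMX coefMC.
case: i => [|i] /=.
  by rewrite IH !bin0 !mulr1n !subn0 add0r -exprSr.
rewrite !IH binS addnC mulrnDr subSS; congr (_ + _).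
case: (ltnP j i.+1) => h.
  by rewrite bin_small // !mulr0n mul0r.
rewrite mulrnAl -exprSr; congr (_ *+ _); congr ('X^_); lia.
Qed.

Lemma exp_coef (R : comNzRingType) (phi : {rmorphism R -> {poly R}})
  (h3 : forall a : R, map_poly phi (phi a) = (map_poly polyC (phi a)) \Po ('X + ('X)%:P))
  (d : R) i l :
  (phi (phi d)`_i)`_l =
  \sum_(j < size (phi d)) (phi d)`_j * ((l == j - i)%N%:R *+ 'C(j, i)).
Proof.
rewrite -coef_map h3 comp_polyE size_map_polyC coef_sum coef_sum.
apply: eq_bigr => j _; rewrite coefZ coef_map /= coef_XY_exp coefCM coefMn coefXn.
by rewrite eq_sym.
Qed.

Lemma exp_lead (R : comNzRingType) (phi : {rmorphism R -> {poly R}})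
  (h3 : forall a : R, map_poly phi (phi a) = (map_poly polyC (phi a)) \Po ('X + ('X)%:P))
  (d : R) i : phi d != 0 -> (i <= (size (phi d)).-1)%N ->
  leq (size (phi (phi d)`_i)) ((size (phi d)).-1 - i).+1%N /\
  (phi (phi d)`_i)`_((size (phi d)).-1 - i)%N = lead_coef (phi d) *+ 'C((size (phi d)).-1, i).
Proof.
move=> nz hi; set N := (size (phi d)).-1.
have sP : size (phi d) = N.+1 by rewrite /N -polySpred.
split.
  apply/leq_sizeP => l hl; rewrite (@exp_coef _ _ h3) big1 // => j _.
  have : (j < N.+1)%N by rewrite -sP ltn_ord.
  move=> hj; have -> : (l == j - i)%N = false by apply/negbTE; apply/eqP; lia.
  by rewrite mul0rn mulr0.
rewrite (@exp_coef _ _ h3) sP big_ord_recr /= big1 ?add0r.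
  by rewrite /lead_coef sP /= eqxx mulrnAr mulr1.
move=> j _; have hj := ltn_ord j.
case: (leqP i j) => hij.
  have -> : (N - i == j - i)%N = false by apply/negbTE; apply/eqP; lia.
  by rewrite mul0rn mulr0.
by rewrite bin_small // mulr0n mulr0.
Qed.

Lemma coef_XaddC_exp (R : comNzRingType) n i :
  (('X + 1 : {poly R}) ^+ n)`_i = 'C(n, i)%:R.
Proof.
elim: n i => [|n IH] i.
  rewrite expr0 coef1; by case: i.
rewrite exprSr mulrDr mulr1 coefD coefMX.
case: i => [|i] /=; first by rewrite IH !bin0 add0r.
by rewrite !IH binS natrD addrC.
Qed.

Lemma bin_ppow (R : comNzRingType) p v s : p \in [pchar R] ->
  'C((p ^ v) * s, p ^ v)%N%:R = s%:R :> R.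
Proof.
move=> hp.
have pr : prime p by exact: (pcharf_prime hp).
rewrite -coef_XaddC_exp exprM.
have hn : [pchar {poly R}].-nat (p ^ v)%N.
  by rewrite pnatX pnatE // pchar_poly hp.
rewrite exprDn_pchar // expr1n.
have -> : ('X ^+ (p ^ v)%N + 1 : {poly R}) ^+ s = (('X + 1) ^+ s) \Po 'X^(p ^ v)%N.
  by rewrite (rmorphXn (comp_poly _)) /= comp_polyD comp_polyX comp_polyC.
rewrite coef_comp_poly_Xn ?expn_gt0 ?prime_gt0 // dvdnn divnn expn_gt0 prime_gt0 //.
by rewrite coef_XaddC_exp bin1.
Qed.

Definition Wrep (L : fieldType) (D : comAlgType L) (z t : D) n (d : D) :=
  exists c : nat -> {poly L}, d = \sum_(i < n.+1) horner_alg t (c i) * z ^+ i.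
Arguments Wrep {L D} z t n d.

Lemma W_add (L : fieldType) (D : comAlgType L) (z t : D) n x y :
  Wrep z t n x -> Wrep z t n y -> Wrep z t n (x + y).
Proof.
move=> [c ->] [c' ->]; exists (fun i => c i + c' i).
by rewrite -big_split /=; apply: eq_bigr => i _; rewrite rmorphD mulrDl.
Qed.

Lemma W_ct (L : fieldType) (D : comAlgType L) (z t : D) n k x :
  Wrep z t n x -> Wrep z t n (horner_alg t k * x).
Proof.
move=> [c ->]; exists (fun i => k * c i).
by rewrite mulr_sumr; apply: eq_bigr => i _; rewrite rmorphM mulrA.
Qed.

Lemma W_const (L : fieldType) (D : comAlgType L) (z t : D) n k :
  Wrep z t n (horner_alg t k).
Proof.
exists (fun i => if i == 0%N then k else 0).
rewrite big_ord_recl /= expr0 mulr1 big1 ?addr0 // => i _.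
by rewrite /= rmorph0 mul0r.
Qed.

Lemma W_z (L : fieldType) (D : comAlgType L) (z t : D) n (F : {poly L}) x :
  horner_alg t F = z ^+ n.+1 ->
  Wrep z t n x -> Wrep z t n (x * z).
Proof.
move=> hF [c ->].
exists (fun i => if i == 0%N then c n * F else c i.-1).
rewrite [RHS]big_ord_recl /= expr0 mulr1 rmorphM /= hF mulr_suml big_ord_recr /= addrC.
congr (_ + _); first by rewrite -mulrA -exprSr.
by apply: eq_bigr => i _; rewrite /= -mulrA -exprSr.
Qed.

Lemma W_all (L : fieldType) (D : comAlgType L) (z t : D) n (F : {poly L}) Q :
  horner_alg t F = z ^+ n.+1 ->
  Wrep z t n ((map_poly (horner_alg z) Q).[t]).
Proof.
move=> hF.
have hr : forall r, Wrep z t n (horner_alg z r).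
  elim/poly_ind => [|r k IH]; first by rewrite rmorph0 -(rmorph0 (horner_alg t)); apply: W_const.
  rewrite rmorphD rmorphM /= horner_algX horner_algC.
  apply: W_add; first exact: W_z hF IH.
  by rewrite -(horner_algC t k); apply: W_const.
elim/poly_ind: Q => [|Q r IH]; first by rewrite rmorph0 horner0 -(rmorph0 (horner_alg t)); apply: W_const.
rewrite rmorphD rmorphM /= map_polyX map_polyC hornerMXaddC.
apply: W_add => //; last exact: hr.
by rewrite mulrC; move: (@W_ct _ _ z t n 'X _ IH); rewrite horner_algX.
Qed.

Lemma swap_g (L : fieldType) p e m (alpha beta : L) :
  swapXY (gpoly p e m alpha beta) = 'X^(p ^ e)%N + (beta%:P - alpha%:P * 'X^m)%:P.
Proof.
rewrite /gpoly rmorphB rmorphM /= rmorphXn /= !swapXY_polyC swapXY_X.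
rewrite rmorphD /= map_polyXn !map_polyC /= polyCB polyCM rmorphXn /= addrA.
by [].
Qed.

Lemma ker_small (L : fieldType) (p e m : nat) (alpha beta : L)
  (D : comAlgType L) (z t : D) (he : (0 < p ^ e)%N)
  (hker : forall q : {poly {poly L}},
      ev2 z t q = 0 <-> exists h : {poly {poly L}}, q = h * gpoly p e m alpha beta)
  (Q : {poly {poly L}}) :
  (size (swapXY Q) <= p ^ e)%N -> ev2 z t Q = 0 -> Q = 0.
Proof.
move=> hs /hker [h hQ].
have [h0|h0] := eqVneq (swapXY h) 0.
  by move: h0; rewrite hQ; move/eqP; rewrite swapXY_eq0 => /eqP ->; rewrite mul0r.
move: hs; rewrite hQ rmorphM /= swap_g size_Mmonic ?monicXnaddC // size_XnaddC //.
have h1 : (0 < size (swapXY h))%N by rewrite lt0n size_poly_eq0.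
case: (size (swapXY h)) h1 => [|s] //= _ H; exfalso; move: H; clear; lia.
Qed.

Lemma ev2E (L : fieldType) (D : comAlgType L) (z t : D) Q :
  ev2 z t Q = (map_poly (horner_alg z) Q).[t].
Proof. by []. Qed.


Theorem lemma3p2 (L : fieldType) (p e m : nat) (alpha beta : L)
  (D : comAlgType L) (z t : D)
  (hp : p \in [pchar L]) (he : (0 < e)%N) (hm : (1 < m)%N)
  (hcop : coprime m p) (ha : alpha != 0) (hb : beta != 0)
  (hgen : forall d : D, exists q : {poly {poly L}}, ev2 z t q = d)
  (hker : forall q : {poly {poly L}},
      ev2 z t q = 0 <-> exists h : {poly {poly L}}, q = h * gpoly p e m alpha beta) :
  forall phi : {rmorphism D -> {poly D}},
    exponential_map phi -> ~ nontrivial_exp phi.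
Proof.
move=> phi [h1 h2 h3] [d0 nd0].
have pr : prime p by exact: (pcharf_prime hp).
have q0 : (0 < p ^ e)%N by rewrite expn_gt0 prime_gt0.
have q2 : (1 < p ^ e)%N.
  have p1 := prime_gt1 pr.
  have : (0 < p ^ e.-1)%N by rewrite expn_gt0 prime_gt0.
  have -> : (p ^ e = p * p ^ e.-1)%N by rewrite -expnS prednK.
  move: p1; clear; nia.
have [n hn] : exists n, (p ^ e)%N = n.+1 by exists (p ^ e).-1; rewrite prednK.
have hcq : coprime m (p ^ e) by rewrite coprime_pexpr.
have rel : z ^+ (p ^ e) = alpha%:A * t ^+ m - beta%:A.
  have := (proj2 (hker (gpoly p e m alpha beta))) (ex_intro _ 1 (esym (mul1r _))).
  rewrite ev2E /gpoly rmorphB rmorphM /= !map_polyC map_polyXn /=.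
  rewrite hornerD hornerN hornerCM hornerC hornerXn.
  rewrite rmorphD rmorphXn /= horner_algX !horner_algC.
  by move/eqP; rewrite subr_eq0 => /eqP <-; rewrite addrK.
pose F : {poly L} := alpha%:P * 'X^m - beta%:P.
have hF : horner_alg t F = z ^+ n.+1.
  by rewrite -hn rel rmorphB rmorphM rmorphXn /= horner_algX !horner_algC.
have K2 : forall c : {poly L}, horner_alg t c = 0 -> c = 0.
  move=> c hc.
  have : map_poly polyC c = 0 :> {poly {poly L}}.
    apply: (@ker_small _ _ _ _ _ _ _ _ _ q0 hker).
      by rewrite swapXY_map_polyC (leq_trans (size_polyC_leq1 _)) // ltnW.
    rewrite ev2E -map_poly_comp.
    rewrite (eq_map_poly (g := in_alg D)); first exact: hc.
    by move=> x /=; rewrite horner_algC.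
  by move/eqP; rewrite map_poly_eq0 => /eqP.
have z0 : z != 0.
  apply/eqP => hz.
  have : ('X%:P : {poly {poly L}}) = 0.
    apply: (@ker_small _ _ _ _ _ _ _ _ _ q0 hker).
      by rewrite swapXY_polyC map_polyX size_polyX.
    by rewrite ev2E map_polyC hornerC /= horner_algX.
  by move/eqP; rewrite polyC_eq0 polyX_eq0.
have t0 : t != 0.
  apply/eqP => ht.
  have : ('X : {poly L}) = 0 by apply: K2; rewrite horner_algX.
  by move/eqP; rewrite polyX_eq0.
have hpD : p \in [pchar D] by exact: (rmorph_pchar (in_alg D) hp).
have frob_add : forall x y : D, (x + y) ^+ (p ^ e) = x ^+ (p ^ e) + y ^+ (p ^ e).
  move=> x y; apply: exprDn_pchar.
  by rewrite pnatX pnatE // hpD.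
have frob_sum : forall (I : Type) (r : seq I) (G : I -> D),
    (\sum_(i <- r) G i) ^+ (p ^ e) = \sum_(i <- r) G i ^+ (p ^ e).
  move=> I r G; elim: r => [|a r IH]; first by rewrite !big_nil expr0n gtn_eqF.
  by rewrite !big_cons frob_add IH.
have sizeF : size F = m.+1.
  have s1 : size (alpha%:P * 'X^m) = m.+1 by rewrite mul_polyC size_scale // size_polyXn.
  rewrite /F size_polyDl s1 // size_polyN (leq_ltn_trans (size_polyC_leq1 _)) //.
  by rewrite ltnS ltnW.
have F0 : F != 0 by rewrite -size_poly_eq0 sizeF.
have sizeT : forall (c : {poly L}) (i : nat), c != 0 ->
    size (c ^+ (p ^ e) * F ^+ i) = ((p ^ e) * (size c).-1 + m * i).+1.
  move=> c i c0.
  have e1 : c ^+ (p ^ e) != 0 by rewrite expf_neq0.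
  have e2 : F ^+ i != 0 by rewrite expf_neq0.
  rewrite size_mul // (polySpred e1) (polySpred e2) /= !size_exp sizeF /=.
  by rewrite [((size c).-1 * _)%N]mulnC addnS.
have red : forall x : D, x ^+ (p ^ e) = 0 -> x = 0.
  move=> x hx.
  have [Q hQ] := hgen x.
  have [c hc] := @W_all _ _ z t n F Q hF.
  rewrite ev2E in hQ; rewrite hQ in hc; rewrite hc in hx *.
  have E : horner_alg t (\sum_(i < n.+1) c i ^+ (p ^ e) * F ^+ i) = 0.
    rewrite -hx frob_sum rmorph_sum. apply: eq_bigr. move=> i _ /=.
    by rewrite rmorphM !rmorphXn /= exprMn hF -!exprM hn mulnC.
  have E0 := K2 _ E.
  have := @sum_sizes _ _ (index_enum 'I_n.+1) (fun i => c i ^+ (p ^ e) * F ^+ i)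
    (index_enum_uniq _).
  case.
  - move=> u v _ _ hx0 hy0.
    have cx : c u != 0 by apply: contraNneq hx0 => ->; rewrite expr0n gtn_eqF // mul0r.
    have cy : c v != 0 by apply: contraNneq hy0 => ->; rewrite expr0n gtn_eqF // mul0r.
    rewrite !sizeT // => [[]] hxy; apply: val_inj.
    by apply: (distinct_weights _ _ _ _ _ _ hcq _ _ hxy); rewrite hn ltn_ord.
  - move=> h0; apply: big1 => i _.
    have := h0 i (mem_index_enum _); move/eqP; rewrite mulf_eq0 !expf_eq0 q0 (negbTE F0) andbF orbF.
    by move/eqP ->; rewrite rmorph0 mul0r.
  - move=> [i _ [nz hs _]].
    by move: hs; rewrite E0 size_poly0 => /esym/eqP; rewrite size_poly_eq0 (negbTE nz).
have nilp : forall (x : D) k, x ^+ k = 0 -> x = 0.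
  move=> x k hk.
  have : x ^+ ((p ^ e) ^ k) = 0.
    have lk : (k <= (p ^ e) ^ k)%N by apply: ltnW; apply: ltn_expl.
    by rewrite -(subnK lk) exprD hk mulr0.
  elim: k {hk} => [|k IH]; first by rewrite expn0 expr1.
  by move=> h; apply: IH; apply: red; rewrite -exprM -expnSr.
have phinz : forall d : D, d != 0 -> phi d != 0.
  move=> d; apply: contraNneq => hd; by rewrite -(h2 d) hd horner0.
have phiconst : forall d : D, (size (phi d) <= 1)%N -> phi d = d%:P.
  by move=> d hs; rewrite {1}(size1_polyC hs) -horner_coef0 h2.
have phict : forall c : {poly L},
    phi (horner_alg t c) = map_poly (in_alg D) c \Po phi t.
  move=> c; have -> : horner_alg t c = (map_poly (in_alg D) c).[t] by [].
  rewrite -horner_map /comp_poly -!map_poly_comp; congr (_.[_]).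
  by apply: eq_map_poly => x /=; rewrite h1.
have sc : forall (c : L) (x : D), c != 0 -> c%:A * x = 0 -> x = 0.
  move=> c x c0 h.
  have : c^-1 *: (c%:A * x) = 0 by rewrite h scaler0.
  by rewrite mulr_algl scalerA mulVf // scale1r.
have bnz : lead_coef (phi z) != 0 by rewrite lead_coef_eq0 phinz.
have anz : lead_coef (phi t) != 0 by rewrite lead_coef_eq0 phinz.
have bpow : forall j, lead_coef (phi z) ^+ j != 0.
  by move=> j; apply/eqP => /nilp /eqP; apply/negP.
have apow : forall j, lead_coef (phi t) ^+ j != 0.
  by move=> j; apply/eqP => /nilp /eqP; apply/negP.
have EQ : phi z ^+ (p ^ e) = (alpha%:A)%:P * phi t ^+ m - (beta%:A)%:P.
  by rewrite -rmorphXn rel rmorphB rmorphM rmorphXn /= !h1.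
have [sQ lQ] := @lead_exp _ _ _ (bpow (p ^ e)%N).
set a := lead_coef (phi t) in anz apow EQ.
set b := lead_coef (phi z) in bnz bpow lQ.
set n1 := (size (phi t)).-1.
set k := (size (phi z)).-1 in sQ.
have sPt : size (phi t) = n1.+1 by rewrite /n1 -polySpred // phinz.
have sPz : size (phi z) = k.+1 by rewrite /k -polySpred // phinz.
have [n10|n1pos] := posnP n1.
  have Pt : phi t = t%:P by apply: phiconst; rewrite sPt n10.
  have : (size (phi z ^+ (p ^ e)) <= 1)%N.
    rewrite EQ Pt -rmorphXn -!rmorphM -rmorphB; exact: size_polyC_leq1.
  rewrite sQ ltnS leqn0 muln_eq0 (gtn_eqF q0) orbF => /eqP k0.
  have Pz : phi z = z%:P by apply: phiconst; rewrite sPz k0.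
  apply: (negP nd0).
  have [Q hQ] := hgen d0.
  have [c hc] := @W_all _ _ z t n F Q hF.
  rewrite ev2E in hQ; rewrite hQ in hc.
  have H : phi d0 == d0%:P.
    rewrite hc rmorph_sum /= (rmorph_sum polyC); apply/eqP; apply: eq_bigr => i _.
    by rewrite rmorphM rmorphXn /= phict Pt Pz comp_polyCr -rmorphXn -rmorphM.
  exact: H.
have aA0 : forall (c : L) (x : D), c != 0 -> x != 0 -> c%:A * x != 0.
  by move=> c x c0 x0; apply/eqP => /(sc c x c0) /eqP; apply/negP.
have al0 : alpha%:A != 0 :> D by rewrite -[alpha%:A]mulr1 aA0 ?oner_neq0.
have [sPm lPm] := @lead_exp _ _ m (apow m).
have lm0 : lead_coef ((alpha%:A)%:P : {poly D}) * lead_coef (phi t ^+ m) != 0.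
  by rewrite lead_coefC lPm aA0.
have sR1 : size ((alpha%:A)%:P * phi t ^+ m) = (n1 * m).+1.
  by rewrite size_proper_mul // sPm size_polyC al0.
have lR1 : lead_coef ((alpha%:A)%:P * phi t ^+ m) = alpha%:A * a ^+ m.
  by rewrite lead_coef_proper_mul // lead_coefC lPm.
have nm2 : (1 < n1 * m)%N.
  by rewrite (leq_trans hm) // leq_pmull.
have sb : (size (- (beta%:A)%:P : {poly D}) < size ((alpha%:A)%:P * phi t ^+ m)%R)%N.
  by rewrite size_polyN sR1 (leq_ltn_trans (size_polyC_leq1 _)) // ltnS ltnW.
have kq : (k * p ^ e = n1 * m)%N.
  by apply/eqP; rewrite -eqSS -sQ EQ size_polyDl // sR1.
have bq : b ^+ (p ^ e) = alpha%:A * a ^+ m.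
  by rewrite -lQ EQ lead_coefDl // lR1.
have [n' hn1] : exists n', n1 = (p ^ e * n')%N.
  have : (p ^ e %| m * n1)%N by rewrite mulnC -kq dvdn_mull.
  rewrite Gauss_dvdr; last by rewrite coprime_sym.
  by move/dvdnP => [x ->]; exists x; rewrite mulnC.
have hk : k = (m * n')%N.
  apply/eqP; rewrite -(eqn_pmul2r q0) kq hn1; apply/eqP.
  move: (p ^ e)%N => Q; clear; nia.
have n'pos : (0 < n')%N by move: n1pos; rewrite hn1 muln_gt0 => /andP[].
have ab : forall i j, a ^+ j * b ^+ i != 0.
  move=> i j; apply/eqP => H.
  have hj : (j <= m * j.+1)%N by rewrite (leq_trans (leqnSn j)) // leq_pmull // ltnW.
  have : b ^+ (p ^ e * j.+1 + i) = 0.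
    rewrite exprD exprM bq exprMn -exprM -(subnK hj) exprD.
    by rewrite -!mulrA H !mulr0.
  by move/nilp/eqP; apply/negP.
have sterm : forall (c : {poly L}) i, c != 0 ->
    size (phi (horner_alg t c * z ^+ i)) = (n1 * (size c).-1 + k * i).+1.
  move=> c i c0.
  have lc0 : lead_coef c != 0 by rewrite lead_coef_eq0.
  have sc' : size (map_poly (in_alg D) c) = size c by rewrite size_map_poly.
  have lc' : lead_coef (map_poly (in_alg D) c) = (lead_coef c)%:A by rewrite lead_coef_map.
  have c'0 : map_poly (in_alg D) c != 0 by rewrite -size_poly_eq0 sc' size_poly_eq0.
  have hsz : (1 < size (phi t))%N by rewrite sPt ltnS.
  have hlj : forall j, lead_coef (map_poly (in_alg D) c) * lead_coef (phi t) ^+ j != 0.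
    by move=> j; rewrite lc' aA0 // apow.
  have [s1 l1] := @comp_lead _ (map_poly (in_alg D) c) (phi t) hsz c'0 hlj.
  have [s2 l2] := @lead_exp _ _ i (bpow i).
  rewrite rmorphM rmorphXn /= phict size_proper_mul; last first.
    by rewrite l1 l2 -mulrA lc' aA0 // ab.
  by rewrite s1 s2 sc' -/n1 -/k addnS [(_ * n1)%N]mulnC.
have degset : forall d : D, d != 0 ->
    exists x i, (size (phi d)).-1 = (n' * (p ^ e * x + m * i))%N.
  move=> d dn0.
  have [Q hQ] := hgen d.
  have [c hc] := @W_all _ _ z t n F Q hF.
  rewrite ev2E in hQ; rewrite hQ in hc.
  have := @sum_sizes _ _ (index_enum 'I_n.+1)
    (fun i => phi (horner_alg t (c i) * z ^+ i)) (index_enum_uniq _).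
  have cnz : forall i : 'I_n.+1, phi (horner_alg t (c i) * z ^+ i) != 0 -> c i != 0.
    by move=> i; apply: contraNneq => ->; rewrite rmorph0 mul0r rmorph0.
  case.
  - move=> u v _ _ hu hv.
    rewrite !sterm ?cnz // => [[]]; rewrite hn1 hk -!mulnA !(mulnCA _ n') -!mulnDr.
    move/eqP; rewrite eqn_pmul2l // => /eqP hxy.
    apply: val_inj.
    by apply: (distinct_weights _ _ _ _ _ _ hcq _ _ hxy); rewrite hn ltn_ord.
  - move=> h0; move: (phinz _ dn0); rewrite hc rmorph_sum big1 ?eqxx // => i _.
    exact: h0 (mem_index_enum _).
  - move=> [i _ [nz hs _]].
    exists (size (c i)).-1, i.
    have -> : phi d = \sum_(y <- index_enum 'I_n.+1) phi (horner_alg t (c y) * z ^+ y).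
      by rewrite hc rmorph_sum.
    rewrite hs sterm ?cnz // hn1 hk /=.
    by rewrite -!mulnA !(mulnCA _ n') -mulnDr.
have [r cpr hr] := pfactor_coprime pr n'pos.
set v := logn p n' in hr.
have pv0 : (0 < p ^ v)%N by rewrite expn_gt0 prime_gt0.
have hkv : k = (p ^ v * (m * r))%N by rewrite hk hr mulnA mulnC.
have ilek : (k - p ^ v <= (size (phi z)).-1)%N by rewrite -/k leq_subr.
have [hs1 hc1] := @exp_lead _ phi h3 z (k - p ^ v)%N (phinz _ z0) ilek.
have rpos : (0 < r)%N by rewrite lt0n; apply/eqP => r0; move: n'pos; rewrite hr r0.
have hpk : (p ^ v <= k)%N by rewrite hkv leq_pmulr // muln_gt0 rpos andbT ltnW.
rewrite -/k (subKn hpk) (bin_sub hpk) in hc1.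
rewrite -/k (subKn hpk) in hs1.
have mr0 : ((m * r)%:R : L) != 0.
  rewrite -(dvdn_pcharf hp) Euclid_dvdM // negb_or -!prime_coprime //.
  by rewrite coprime_sym hcop.
have cz : (phi (phi z)`_(k - p ^ v)%N)`_(p ^ v) != 0.
  rewrite hc1 -/b hkv -mulr_natl -(rmorph_nat (in_alg D)) bin_ppow //.
  by rewrite aA0.
set del := (phi z)`_(k - p ^ v)%N in hs1 cz.
have del0 : del != 0.
  by apply: contraNneq cz => ->; rewrite rmorph0 coef0.
have sdel : (size (phi del)).-1 = (p ^ v)%N.
  apply/eqP; rewrite eqn_leq -ltnS prednK ?hs1 //; last first.
    by rewrite lt0n size_poly_eq0 phinz.
  rewrite -ltnS prednK; last by rewrite lt0n size_poly_eq0 phinz.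
  by apply: contraR cz; rewrite -leqNgt => hsz; rewrite nth_default.
have [x [i hxi]] := degset del del0.
move: hxi; rewrite sdel hr.
have q2' := q2.
move: pv0 hm q2' => /=; set P' := (p ^ v)%N; set q := (p ^ e)%N.
move=> pv0 hm2 q3 E.
have w0 : (q * x + m * i != 0)%N.
  by apply/eqP => h; move: E; rewrite h muln0 => E'; move: pv0; rewrite E'.
have r0 : (r != 0)%N by apply/eqP => h; move: E; rewrite h !mul0n => E'; move: pv0; rewrite E'.
have w2 : (2 <= q * x + m * i)%N.
  case: x E w0 => [|x] E w0.
    case: i E w0 => [|i] E w0; first by rewrite !muln0 in w0.
    by rewrite muln0 add0n (leq_trans hm2) // leq_pmulr.
  by rewrite (leq_trans q3) // (leq_trans _ (leq_addr _ _)) // leq_pmulr.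
move: E w2 r0 pv0; clear; move: (q * x + m * i)%N => w; clearbody P'.
move=> E w2 r0 pv.
have h : (2 <= r * w)%N by rewrite (leq_trans w2) // leq_pmull // lt0n.
have : (P' * 2 <= P' * (r * w))%N by rewrite leq_mul2l h orbT.
rewrite [X in (_ <= X)%N]mulnA [(P' * r)%N]mulnC -E.
move: pv; clear; lia.
Qed.
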